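(* (a) For integers $n\ge d\ge 2$ with $d\mid dn$ (always true), $\mathrm{diam}(Q_n(d,n))=n+\max\{\lfloor n/2\rfloor,\,2\lceil n/d\rceil-2\}$ (here $n\ge 3$). (b) For integers $d\ge1$, $r\ge3$ with $dr\ge 2$: $\mathrm{diam}(COR(d,r))=(d+1)r$ if $r=3$, and $\mathrm{diam}(COR(d,r))=(d+1)r+\lfloor r/2\rfloor-2$ if $r\ge4$.
   Context: For $m\ge1$, $\mathbb{Z}_2^m=\{0,1\}^m$ with coordinatewise addition mod 2; $e_i$ is the $i$-th standard basis vector, subscripts read modulo $m$; $\sigma^j(b)$ is the vector with $\sigma^j(b)_{i+j}=b_i$ (indices mod $m$). The recursive cube of rings $Q_n(d,r)$ (for $n\ge d$, $dr\equiv0\pmod n$) is the simple graph on $\mathbb{Z}_2^n\times\mathbb{Z}_r$ in which $(a,x)$ is adjacent to $(a+e_{i+dx},x)$ for $1\le i\le d$ and to $(a,x\pm1)$. The cube-of-rings $COR(d,r)$ is the Cayley graph on the group with underlying set $\mathbb{Z}_2^{dr}\times\mathbb{Z}_r$ and multiplication $(a,x)(b,y)=(\sigma^{dy}(a)+b,x+y)$, with connection set $\{(0_{dr},1),(0_{dr},r-1),(e_1,0),\dots,(e_d,0)\}$ ($u\sim v$ iff $u^{-1}v$ is in the connection set). *)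

(* Defs.v *)
From HB Require Import structures.
From mathcomp Require Import all_boot.
Set Implicit Arguments. Unset Strict Implicit. Unset Printing Implicit Defensive.

Definition walkb (T : finType) (e : rel T) (k : nat) (x y : T) : bool :=
  [exists p : k.-tuple T, path e x p && (last x p == y)].

(* length of a shortest walk from x to y; a shortest walk (if any) has fewer
   than #|T| edges, so this is the graph distance when y is reachable from x
   (and #|T| otherwise) *)
Definition dist (T : finType) (e : rel T) (x y : T) : nat :=
  find (fun k => walkb e k x y) (iota 0 #|T|).

Definition diam (T : finType) (e : rel T) : nat :=
  \max_(x : T) \max_(y : T) dist e x y.

(** * Z_2^m, 0-based coordinates 0..m-1 (coordinate i+1 of the paper) *)
Definition bvec (m : nat) := {ffun 'I_m -> bool}.
Definition vadd m (a b : bvec m) : bvec m := [ffun i => a i (+) b i].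
Definition vzero m : bvec m := [ffun _ => false].
Definition evec m (k : nat) : bvec m := [ffun i : 'I_m => (i : nat) == k %% m].
Definition vat m (b : bvec m) (k : nat) : bool :=
  [exists i : 'I_m, ((i : nat) == k %% m) && b i].
(* sigma^j(b)_{i+j} = b_i, i.e. sigma^j(b)_i = b_{i-j} (indices mod m) *)
Definition sigma m (j : nat) (b : bvec m) : bvec m :=
  [ffun i : 'I_m => vat b (i + m - j %% m)].

Definition Zadd (r : nat) (x y : 'I_r) : 'I_r :=
  Ordinal (ltn_pmod (x + y) (leq_ltn_trans (leq0n x) (ltn_ord x))).

(** * Recursive cube of rings Q_n(d,r) on Z_2^n x Z_r:
    (a,x) ~ (a + e_{i+dx}, x) for 1 <= i <= d  (0-based index (i-1)+dx mod n),
    (a,x) ~ (a, x +- 1). *)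
Definition Qadj (n d r : nat) : rel (bvec n * 'I_r) := fun u v =>
  ((u.2 == v.2) && [exists k : 'I_d, v.1 == vadd u.1 (evec n (k + d * u.2))])
  || ((u.1 == v.1) &&
      (((v.2 : nat) == (u.2 + 1) %% r) || ((v.2 : nat) == (u.2 + (r - 1)) %% r))).

(** * Cube of rings COR(d,r): Cayley graph on Z_2^{dr} x Z_r with
    (a,x)(b,y) = (sigma^{dy}(a) + b, x + y). *)
Definition CORmul (d r : nat) (u s : bvec (d * r) * 'I_r) : bvec (d * r) * 'I_r :=
  (vadd (sigma (d * s.2) u.1) s.1, Zadd u.2 s.2).

Definition CORconn (d r : nat) (s : bvec (d * r) * 'I_r) : bool :=
  ((s.1 == vzero _) && (((s.2 : nat) == 1) || ((s.2 : nat) == r - 1)))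
  || (((s.2 : nat) == 0) && [exists k : 'I_d, s.1 == evec (d * r) k]).

Definition CORadj (d r : nat) : rel (bvec (d * r) * 'I_r) := fun u v =>
  [exists s, CORconn s && (v == CORmul u s)].

Arguments Qadj : clear implicits.
Arguments CORadj : clear implicits.

(* Main.v *)
Require Import Defs.
From HB Require Import structures.
From mathcomp Require Import all_boot.
From Stdlib Require Import ZArith Lia.
From mathcomp Require Import zify.
Set Implicit Arguments. Unset Strict Implicit. Unset Printing Implicit Defensive.

Lemma walkb0 (T : finType) (e : rel T) x y : walkb e 0 x y = (x == y).
Proof.
apply/existsP/idP => [[p /andP[_ /eqP <-]]|/eqP <-].
  by rewrite tuple0.
by exists [tuple]; rewrite /= eqxx.
Qed.

Lemma walkbS (T : finType) (e : rel T) k x y :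
  walkb e k.+1 x y = [exists z, e x z && walkb e k z y].
Proof.
apply/existsP/existsP => [[p]|[z /andP[ez /existsP[p /andP[pp lp]]]]].
  case: p => [[|z s] //= Hs] /andP[/andP[ez ps] ls].
  have Hs' : size s == k by [].
  exists z; rewrite ez /=; apply/existsP; exists (Tuple Hs'); by rewrite /= ps.
exists [tuple of z :: p]; by rewrite /= ez pp.
Qed.

Lemma walkb_cat (T : finType) (e : rel T) k1 k2 x z y :
  walkb e k1 x z -> walkb e k2 z y -> walkb e (k1 + k2) x y.
Proof.
elim: k1 x => [|k IH] x.
  by rewrite walkb0 => /eqP ->.
rewrite walkbS => /existsP[w /andP[ew wk]] H.
rewrite addSn walkbS; apply/existsP; exists w; rewrite ew /=; exact: IH.
Qed.

Lemma walkb1 (T : finType) (e : rel T) x y : e x y -> walkb e 1 x y.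
Proof. move=> h; rewrite walkbS; apply/existsP; exists y; by rewrite h walkb0 eqxx. Qed.

Lemma dist_le (T : finType) (e : rel T) k x y : walkb e k x y -> dist e x y <= k.
Proof.
move=> w; case: (leqP (dist e x y) k) => // H.
have Hs := find_size (fun k => walkb e k x y) (iota 0 #|T|).
rewrite size_iota in Hs.
have := before_find 0 H; rewrite nth_iota ?add0n ?w //.
exact: leq_trans H Hs.
Qed.

Lemma dist_ge (T : finType) (e : rel T) D x y :
  D <= #|T| -> (forall k, k < D -> ~~ walkb e k x y) -> D <= dist e x y.
Proof.
move=> HD Hk; case: (leqP D (dist e x y)) => // H.
have Hlt : dist e x y < #|T| by exact: leq_trans H HD.
have Hh : has (fun k => walkb e k x y) (iota 0 #|T|).
  by rewrite has_find size_iota.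
have := nth_find 0 Hh; rewrite -/(dist e x y) nth_iota // add0n => W.
by move: (Hk _ H); rewrite W.
Qed.

Lemma diam_le (T : finType) (e : rel T) D : (forall x y, dist e x y <= D) -> diam e <= D.
Proof.
move=> H; apply/bigmax_leqP => x _; apply/bigmax_leqP => y _; exact: H.
Qed.

Lemma diam_ge (T : finType) (e : rel T) x y : dist e x y <= diam e.
Proof.
rewrite /diam.
have H1 := @leq_bigmax _ (fun x => \max_y dist e x y) x.
have H2 := @leq_bigmax _ (fun y => dist e x y) y.
exact: leq_trans H2 H1.
Qed.

Lemma walkb_iso (T : finType) (e e' : rel T) (f : T -> T) :
  injective f -> (forall u v, e u v = e' (f u) (f v)) ->
  forall k u v, walkb e k u v = walkb e' k (f u) (f v).
Proof.
move=> inj He; have [g fg gf] := injF_bij inj.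
elim=> [|k IH] u v; first by rewrite !walkb0 (eqtype.inj_eq inj).
rewrite !walkbS; apply/existsP/existsP => [[z /andP[ez wz]]|[z /andP[ez wz]]].
  by exists (f z); rewrite -He -IH ez.
by exists (g z); rewrite He IH gf ez.
Qed.

Lemma diam_iso (T : finType) (e e' : rel T) (f : T -> T) :
  injective f -> (forall u v, e u v = e' (f u) (f v)) -> diam e = diam e'.
Proof.
move=> inj He.
have Hd : forall u v, dist e u v = dist e' (f u) (f v).
  move=> u v; rewrite /dist; apply: eq_find => k; exact: walkb_iso.
rewrite /diam [RHS](reindex_inj inj); apply: eq_bigr => u _.
rewrite [RHS](reindex_inj inj); apply: eq_bigr => v _; exact: Hd.
Qed.


Definition posr (r : nat) (p : Z) : nat := Z.to_nat (p mod Z.of_nat r).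

Lemma posr_lt r p : 0 < r -> posr r p < r.
Proof.
move=> r0; rewrite /posr.
have := Z.mod_pos_bound p (Z.of_nat r); lia.
Qed.

Lemma posr_spec r p : 0 < r -> exists t, p = (Z.of_nat (posr r p) + t * Z.of_nat r)%Z.
Proof.
move=> r0; rewrite /posr; exists (p / Z.of_nat r)%Z.
have := Z.mod_pos_bound p (Z.of_nat r).
have := Z.div_mod p (Z.of_nat r). lia.
Qed.

Lemma posr_unique r p z t : z < r -> p = (Z.of_nat z + t * Z.of_nat r)%Z -> posr r p = z.
Proof.
move=> zr ->; rewrite /posr.
rewrite Z.mod_add; last lia.
rewrite Z.mod_small; lia.
Qed.

Lemma posr_add r X (k : nat) : 0 < r -> posr r (X + Z.of_nat k) = (posr r X + k) %% r.
Proof.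
move=> r0; have [t Ht] := posr_spec X r0.
set x := posr r X in Ht *.
have H := divn_eq (x + k) r.
set q := (x + k) %/ r in H; set m := (x + k) %% r in H *.
apply: (@posr_unique _ _ _ (t + Z.of_nat q)%Z); first by rewrite /m ltn_mod.
have H' : Z.of_nat (x + k) = Z.of_nat (q * r + m) by rewrite -H.
rewrite Nat2Z.inj_add Nat2Z.inj_add Nat2Z.inj_mul in H'.
rewrite Ht; nia.
Qed.

Lemma posr_succ r X : 0 < r -> posr r (X + 1) = (posr r X + 1) %% r.
Proof. move=> r0; exact: (posr_add X 1 r0). Qed.

Lemma posr_pred r X : 0 < r -> posr r (X - 1) = (posr r X + (r - 1)) %% r.
Proof.
move=> r0; have -> : (X - 1 = (X - Z.of_nat r) + Z.of_nat (r - 1))%Z by lia.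
rewrite posr_add //; congr (_ %% _); congr (_ + _).
have [t Ht] := posr_spec X r0.
apply: (@posr_unique _ _ _ (t - 1)%Z); first exact: posr_lt. lia.
Qed.

Definition Gadj (n r : nat) (W : nat -> nat -> bool) : rel (bvec n * 'I_r) := fun u v =>
  ((u.2 == v.2) && [exists j : 'I_n, W u.2 j && (v.1 == vadd u.1 (evec n j))])
  || ((u.1 == v.1) &&
      (((v.2 : nat) == (u.2 + 1) %% r) || ((v.2 : nat) == (u.2 + (r - 1)) %% r))).

Definition upd n (a b : bvec n) (C : {set 'I_n}) : bvec n :=
  [ffun i => if i \in C then b i else a i].
Definition Dset n (a b : bvec n) : {set 'I_n} := [set j | a j != b j].
Definition Wset n (W : nat -> nat -> bool) (x : nat) : {set 'I_n} := [set j : 'I_n | W x j].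
Arguments Wset : clear implicits.
Arguments Gadj : clear implicits.

Lemma flipE n (a : bvec n) (j i : 'I_n) :
  vadd a (evec n j) i = if i == j then ~~ a i else a i.
Proof.
rewrite /vadd /evec !ffunE (modn_small (ltn_ord j)).
have -> : (i == j :> nat) = (i == j) by [].
by case: eqVneq => [->|_]; rewrite ?eqxx ?addbT ?addbF.
Qed.

Lemma fixW n r W (b : bvec n) (x : 'I_r) m (a : bvec n) :
  #|Wset n W x :&: Dset a b| = m ->
  walkb (Gadj n r W) m (a, x) (upd a b (Wset n W x), x).
Proof.
elim: m a => [|m IH] a Hc.
  rewrite walkb0; apply/eqP; congr (_, _); apply/ffunP => i; rewrite ffunE.
  case: ifP => // iW; apply/eqP; apply: contraT => ab.
  have : i \in Wset n W x :&: Dset a b by rewrite inE iW inE ab.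
  by rewrite (cards0_eq Hc) inE.
have : 0 < #|Wset n W x :&: Dset a b| by rewrite Hc.
case/card_gt0P => j; rewrite !inE => /andP[jW jD].
set a' := vadd a (evec n j).
have Hc' : #|Wset n W x :&: Dset a' b| = m.
  have : Wset n W x :&: Dset a' b = (Wset n W x :&: Dset a b) :\ j.
    apply/setP => i; rewrite !inE /a' flipE.
    case: (eqVneq i j) => [->|_] //=; first by move: jD; case: (a j); case: (b j); rewrite ?andbF.
  move=> ->; move: Hc; rewrite (cardsD1 j) !inE jW jD /=; lia.
have -> : upd a b (Wset n W x) = upd a' b (Wset n W x).
  apply/ffunP => i; rewrite !ffunE; case: ifP => // iW.
  rewrite (modn_small (ltn_ord j)); have -> : (i == j :> nat) = (i == j) by [].
  case: (eqVneq i j) => [e|_]; last by rewrite addbF.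
  by move: iW; rewrite e inE jW.
rewrite walkbS; apply/existsP; exists (a', x); rewrite IH // andbT.
apply/orP; left; rewrite /= eqxx /=; apply/existsP; exists j; by rewrite jW eqxx.
Qed.

Fixpoint Cov n (W : nat -> nat -> bool) r (s X : Z) (k : nat) : {set 'I_n} :=
  match k with
  | 0 => Wset n W (posr r X)
  | k'.+1 => Wset n W (posr r X) :|: Cov n W r s (X + s)%Z k'
  end.

Lemma upd_upd n (a b : bvec n) A B : upd (upd a b A) b B = upd a b (A :|: B).
Proof.
apply/ffunP => i; rewrite !ffunE inE.
by case: (i \in A); case: (i \in B).
Qed.

Lemma Dset_upd n (a b : bvec n) A : Dset (upd a b A) b = Dset a b :\: A.
Proof.
apply/setP => i; rewrite !inE ffunE.
by case: (i \in A); rewrite ?eqxx.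
Qed.

Lemma card_split n (A C D : {set 'I_n}) :
  #|A :&: D| + #|C :&: (D :\: A)| <= #|(A :|: C) :&: D|.
Proof.
rewrite -cardsUI.
have -> : (A :&: D) :&: (C :&: (D :\: A)) = set0.
  apply/setP => i; rewrite !inE; by case: (i \in A); rewrite ?andbF.
rewrite cards0 addn0; apply: subset_leq_card; apply/subsetP => i.
rewrite !inE; by case: (i \in A); case: (i \in C); case: (i \in D).
Qed.

Lemma ring_stepG n r W (a : bvec n) s X (x y : 'I_r) : 0 < r -> (s = 1 \/ s = -1)%Z ->
  x = posr r X :> nat -> y = posr r (X + s) :> nat -> Gadj n r W (a, x) (a, y).
Proof.
move=> r0 Hs hx hy; apply/orP; right; rewrite /= eqxx /= hy hx.
case: Hs => ->; [by rewrite posr_succ // eqxx | ].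
have -> : (X + -1 = X - 1)%Z by lia.
by rewrite posr_pred // eqxx orbT.
Qed.

Lemma sweep n r W (b : bvec n) s k : 0 < r -> (s = 1 \/ s = -1)%Z ->
  forall (a : bvec n) X (x y : 'I_r), x = posr r X :> nat ->
  y = posr r (X + s * Z.of_nat k)%Z :> nat ->
  exists L, L <= k + #|Cov n W r s X k :&: Dset a b| /\
    walkb (Gadj n r W) L (a, x) (upd a b (Cov n W r s X k), y).
Proof.
move=> r0 Hs; elim: k => [|k IH] a X x y hx hy.
  have xy : x = y by apply: ord_inj; rewrite hx hy Z.mul_0_r Z.add_0_r.
  exists #|Cov n W r s X 0 :&: Dset a b|; split => //.
  rewrite -xy /= -hx; exact: fixW.
set x' : 'I_r := Ordinal (posr_lt (X + s) r0).
have e : (X + s * Z.of_nat k.+1 = X + s + s * Z.of_nat k)%Z.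
  rewrite Nat2Z.inj_succ; ring.
have [L' [HL' HW']] := IH (upd a b (Wset n W x)) (X + s)%Z x' y erefl
  (etrans hy (f_equal (posr r) e)).
exists (#|Wset n W x :&: Dset a b| + 1 + L'); split.
  rewrite Dset_upd in HL'.
  have := card_split (Wset n W x) (Cov n W r s (X + s) k) (Dset a b).
  rewrite /= -hx; move=> H; move: HL' H; set A := #|_ :&: Dset a b|; set B := #|_ :&: (_ :\: _)|; set C := #|_ :&: Dset a b|; lia.
rewrite /= -hx -upd_upd.
rewrite -addnA.
apply: (walkb_cat (@fixW n r W b x _ a erefl)).
apply: (walkb_cat (walkb1 _) HW').
have := (ring_stepG W (upd a b (Wset n W x)) r0 Hs hx); by apply.
Qed.

Lemma cov_char n (W : nat -> nat -> bool) r s k : forall X (j : 'I_n) (i : nat), i <= k ->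
  W (posr r (X + s * Z.of_nat i)%Z) j -> j \in Cov n W r s X k.
Proof.
elim: k => [|k IH] X j i.
  rewrite leqn0 => /eqP -> /=; rewrite Z.mul_0_r Z.add_0_r => H; by rewrite inE.
case: i => [|i] Hi /=.
  rewrite Z.mul_0_r Z.add_0_r => H; by rewrite !inE H.
move=> H; rewrite inE; apply/orP; right; apply: (IH _ _ i) => //.
have -> : (X + s + s * Z.of_nat i = X + s * Z.of_nat i.+1)%Z by rewrite Nat2Z.inj_succ; ring.
exact: H.
Qed.

Lemma seg_char (X P p : Z) : (Z.min X P <= p <= Z.max X P)%Z ->
  exists i : nat, i <= Z.to_nat (Z.abs (P - X)) /\
     p = (X + (if (X <=? P)%Z then 1 else -1) * Z.of_nat i)%Z.
Proof.
move=> H; exists (Z.to_nat (Z.abs (p - X))); split.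
  apply/leP; lia.
case: (Z.leb_spec X P) => h; lia.
Qed.

Lemma ubG n r (W : nat -> nat -> bool) (a b : bvec n) X P Y (x y : 'I_r) : 0 < r ->
  x = posr r X :> nat -> y = posr r Y :> nat ->
  (forall j : 'I_n, exists p, (Z.min X (Z.min P Y) <= p <= Z.max X (Z.max P Y))%Z
       /\ W (posr r p) j) ->
  exists L, L <= Z.to_nat (Z.abs (P - X)) + Z.to_nat (Z.abs (Y - P)) + n /\
     walkb (Gadj n r W) L (a, x) (b, y).
Proof.
move=> r0 hx hy Hcov.
set s1 := if (X <=? P)%Z then 1%Z else (-1)%Z.
set s2 := if (P <=? Y)%Z then 1%Z else (-1)%Z.
set k1 := Z.to_nat (Z.abs (P - X)); set k2 := Z.to_nat (Z.abs (Y - P)).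
have Hs1 : (s1 = 1 \/ s1 = -1)%Z by rewrite /s1; case: (X <=? P)%Z; [left|right].
have Hs2 : (s2 = 1 \/ s2 = -1)%Z by rewrite /s2; case: (P <=? Y)%Z; [left|right].
have e1 : (X + s1 * Z.of_nat k1 = P)%Z.
  rewrite /s1 /k1; case: (Z.leb_spec X P) => h; lia.
have e2 : (P + s2 * Z.of_nat k2 = Y)%Z.
  rewrite /s2 /k2; case: (Z.leb_spec P Y) => h; lia.
set p : 'I_r := Ordinal (posr_lt P r0).
have [L1 [HL1 HW1]] := @sweep n r W b s1 k1 r0 Hs1 a X x p hx (f_equal (posr r) (esym e1)).
have [L2 [HL2 HW2]] := @sweep n r W b s2 k2 r0 Hs2 (upd a b (Cov n W r s1 X k1)) P p y erefl
  (etrans hy (f_equal (posr r) (esym e2))).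
exists (L1 + L2); split; last first.
  apply: (walkb_cat HW1); rewrite upd_upd in HW2.
  suff E : upd a b (Cov n W r s1 X k1 :|: Cov n W r s2 P k2) = b by rewrite E in HW2.
  apply/ffunP => j; rewrite ffunE.
  suff -> : j \in Cov n W r s1 X k1 :|: Cov n W r s2 P k2 by [].
  have [q [Hq Wq]] := Hcov j; rewrite inE.
  case: (Z.le_gt_cases q P) => hq.
    case: (Z.le_gt_cases (Z.min X P) q) => hq'.
      have [i [Hi Hqi]] := @seg_char X P q ltac:(lia).
      by apply/orP; left; apply: (cov_char (i:=i)) => //; rewrite /s1 -Hqi.
    have [i [Hi Hqi]] := @seg_char P Y q ltac:(lia).
    by apply/orP; right; apply: (cov_char (i:=i)) => //; rewrite /s2 -Hqi.
  case: (Z.le_gt_cases q (Z.max X P)) => hq'.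
    have [i [Hi Hqi]] := @seg_char X P q ltac:(lia).
    by apply/orP; left; apply: (cov_char (i:=i)) => //; rewrite /s1 -Hqi.
  have [i [Hi Hqi]] := @seg_char P Y q ltac:(lia).
  by apply/orP; right; apply: (cov_char (i:=i)) => //; rewrite /s2 -Hqi.
rewrite Dset_upd in HL2.
have h1 := cardsID (Cov n W r s1 X k1) (Dset a b).
have h2 : #|Cov n W r s2 P k2 :&: (Dset a b :\: Cov n W r s1 X k1)| <=
          #|Dset a b :\: Cov n W r s1 X k1| by apply: subset_leq_card; apply: subsetIr.
have h3 : #|Dset a b| <= n by apply: leq_trans (max_card _) _; rewrite card_ord.
rewrite setIC in HL1.
move: HL1 HL2 h1 h2 h3.
set A := #|_ :&: Cov n W r s1 X k1|; set B := #|Cov n W r s2 P k2 :&: _|.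
set C := #|_ :\: _|. set D := #|Dset a b|. lia.
Qed.

Lemma lbG n r (W : nat -> nat -> bool) (b : bvec n) (y : 'I_r) : 0 < r ->
  forall k (a : bvec n) (x : 'I_r) X, x = posr r X :> nat ->
  walkb (Gadj n r W) k (a, x) (b, y) ->
  exists lo hi Y, (lo <= X <= hi)%Z /\ (lo <= Y <= hi)%Z /\ y = posr r Y :> nat /\
    (forall j : 'I_n, a j != b j -> exists p, (lo <= p <= hi)%Z /\ W (posr r p) j) /\
    (Z.of_nat #|Dset a b| + 2 * (hi - lo) - Z.abs (X - Y) <= Z.of_nat k)%Z.
Proof.
move=> r0; elim=> [|k IH] a x X hx.
  rewrite walkb0 => /eqP [-> xy].
  exists X, X, X; split; first lia. split; first lia. split; first by rewrite -xy.
  split; first by move=> j; rewrite eqxx.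
  have -> : Dset b b = set0 by apply/setP => j; rewrite !inE eqxx.
  rewrite cards0; lia.
rewrite walkbS => /existsP[[a' x'] /andP[E Wk]].
case/orP: E => /andP[ex0 E].
  have ex' : x = x' := eqP ex0.
  case/existsP: E => j0 /andP[Wj0 /eqP ea0].
  have ea' : a' = vadd a (evec n j0) := ea0.
  have [lo [hi [Y [h1 [h2 [h3 [h4 h5]]]]]]] := IH a' x' X (etrans (esym (f_equal val ex')) hx) Wk.
  exists lo, hi, Y; do 3 (split; first done); split.
    move=> j ajb; case: (eqVneq j j0) => [->|ne].
      exists X; split; first lia. by rewrite -hx.
    apply: h4; by rewrite ea' flipE (negPf ne).
  suff H : #|Dset a b| <= #|Dset a' b| + 1.
    move: h5 H; set A := #|Dset a b|; set B := #|Dset a' b|; lia.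
  have : Dset a b \subset j0 |: Dset a' b.
    apply/subsetP => j; rewrite !inE ea' flipE; case: (eqVneq j j0) => //= _ ->; by rewrite orbT.
  move/subset_leq_card; rewrite cardsU1; case: (j0 \in Dset a' b); lia.
have ea : a = a' := eqP ex0.
rewrite -ea in Wk.
have [X' [hX' eX']] : exists X', x' = posr r X' :> nat /\ (X' = X + 1 \/ X' = X - 1)%Z.
  case/orP: E => /eqP ->.
    by exists (X + 1)%Z; rewrite posr_succ // -hx; split => //; left.
  by exists (X - 1)%Z; rewrite posr_pred // -hx; split => //; right.
have [lo [hi [Y [h1 [h2 [h3 [h4 h5]]]]]]] := IH a x' X' hX' Wk.
exists (Z.min lo X), (Z.max hi X), Y; split; first lia. split; first lia. split => //.
split.
  move=> j /h4 [p [hp Wp]]; exists p; split => //; lia.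
move: h5; set D := Z.of_nat #|Dset a b|. lia.
Qed.


Lemma modn_fromZ (K j n : nat) (m : Z) : j < n ->
  Z.of_nat K = (Z.of_nat j + m * Z.of_nat n)%Z -> K %% n = j.
Proof.
move=> jn HK.
have m0 : (0 <= m)%Z by nia.
have -> : K = Z.to_nat m * n + j by lia.
by rewrite modnMDl modn_small.
Qed.

Lemma modn_posr (k m : nat) : 0 < m -> k %% m = posr m (Z.of_nat k).
Proof.
move=> m0; symmetry; apply: (@posr_unique _ _ _ (Z.of_nat (k %/ m))); first by rewrite ltn_mod.
have H := divn_eq k m; lia.
Qed.

Lemma posr_cong r p q : 0 < r -> posr r p = posr r q -> exists s, (p - q = s * Z.of_nat r)%Z.
Proof.
move=> r0 e; have [t1 H1] := posr_spec p r0; have [t2 H2] := posr_spec q r0.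
exists (t1 - t2)%Z; rewrite e in H1; lia.
Qed.

Lemma Zmul_small (u s n : Z) : (0 < u < n)%Z -> u = (s * n)%Z -> False.
Proof. move=> H E; case: (Z.le_gt_cases s 0) => hs; nia. Qed.

Definition WQ (n d : nat) (x j : nat) : bool := [exists k : 'I_d, j == (k + d * x) %% n].

Lemma covQ_up n d lo hi : 0 < d -> 0 < n ->
  (Z.of_nat n <= (hi - lo + 1) * Z.of_nat d)%Z ->
  forall j : 'I_n, exists p, (lo <= p <= hi)%Z /\ WQ n d (posr n p) j.
Proof.
move=> d0 n0 Hc j.
set q := ((Z.of_nat j - Z.of_nat d * lo) mod Z.of_nat n)%Z.
have Hq := Z.mod_pos_bound (Z.of_nat j - Z.of_nat d * lo) (Z.of_nat n) ltac:(lia).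
have Hq2 := Z.div_mod (Z.of_nat j - Z.of_nat d * lo) (Z.of_nat n) ltac:(lia).
rewrite -/q in Hq Hq2.
set w := ((Z.of_nat j - Z.of_nat d * lo) / Z.of_nat n)%Z in Hq2.
have Hd1 := Z.mod_pos_bound q (Z.of_nat d) ltac:(lia).
have Hd2 := Z.div_mod q (Z.of_nat d) ltac:(lia).
set k := (q mod Z.of_nat d)%Z in Hd1 Hd2; set e := (q / Z.of_nat d)%Z in Hd2.
have e0 : (0 <= e)%Z by nia.
have e1 : (e <= hi - lo)%Z by nia.
exists (lo + e)%Z; split; first lia.
have n0' : 0 < n by [].
have [t Ht] := posr_spec (lo + e)%Z n0'.
set z := posr n (lo + e) in Ht *.
apply/existsP; exists (Ordinal (ltac:(apply/ltP; lia) : Z.to_nat k < d)).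
apply/eqP; symmetry; apply: (@modn_fromZ _ _ _ (- w - Z.of_nat d * t)%Z) => //=.
rewrite Nat2Z.inj_add Nat2Z.inj_mul Z2Nat.id; last lia.
nia.
Qed.

Lemma covQ_low n d lo hi : 0 < d -> 0 < n ->
  ((hi - lo + 1) * Z.of_nat d < Z.of_nat n)%Z ->
  exists j : 'I_n, forall p, (lo <= p <= hi)%Z -> ~~ WQ n d (posr n p) j.
Proof.
move=> d0 n0 Hc.
have n0' : 0 < n by [].
exists (Ordinal (posr_lt (Z.of_nat d * (hi + 1))%Z n0')) => p hp.
apply/negP => /existsP[k /eqP Hk].
have [t1 H1] := posr_spec (Z.of_nat d * (hi + 1))%Z n0'.
have [t2 H2] := posr_spec p n0'.
set z := posr n p in H2 Hk; set J := posr n (Z.of_nat d * (hi + 1)) in H1 Hk.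
have H3 := divn_eq (k + d * z) n.
rewrite /= in Hk; rewrite -Hk in H3.
set t3 := (k + d * z) %/ n in H3.
have hk := ltn_ord k.
have E : (Z.of_nat d * (hi + 1 - p) - Z.of_nat k =
          (t1 - Z.of_nat t3 - Z.of_nat d * t2) * Z.of_nat n)%Z.
  have H3' : Z.of_nat (k + d * z) = Z.of_nat (t3 * n + J) by rewrite -H3.
  rewrite Nat2Z.inj_add Nat2Z.inj_mul Nat2Z.inj_add Nat2Z.inj_mul in H3'.
  nia.
apply: (Zmul_small _ E); nia.
Qed.

Lemma evec_mod m k : evec m k = evec m (k %% m).
Proof. apply/ffunP => i; by rewrite !ffunE modn_mod. Qed.

Lemma Qadj_G n d : 0 < n -> forall u v, Qadj n d n u v = Gadj n n (WQ n d) u v.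
Proof.
move=> n0 u v; rewrite /Qadj /Gadj; congr (_ || _); congr (_ && _).
apply/existsP/existsP => [[k /eqP ->]|[j /andP[/existsP[k /eqP ej] /eqP ->]]].
  exists (Ordinal (ltn_pmod (k + d * u.2) n0)).
  rewrite evec_mod eqxx andbT; apply/existsP; by exists k.
exists k; by rewrite ej -evec_mod.
Qed.

Lemma plan (X Y c : Z) : (0 <= c)%Z -> exists P,
  (c <= Z.max X (Z.max P Y) - Z.min X (Z.min P Y))%Z /\
  (Z.abs (P - X) + Z.abs (Y - P) <=
     (if (c <=? Z.abs (Y - X))%Z then Z.abs (Y - X) else 2 * c - Z.abs (Y - X)))%Z.
Proof.
move=> c0; case: (Z.leb_spec c (Z.abs (Y - X))) => h.
  exists Y; lia.
case: (Z.le_gt_cases X Y) => h'.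
  exists (Y - c)%Z; lia.
exists (Y + c)%Z; lia.
Qed.

Lemma ub_dist n r (W : nat -> nat -> bool) (c : Z) (M : nat) : 0 < r -> (0 <= c)%Z ->
  (forall lo hi, (c <= hi - lo)%Z -> forall j : 'I_n,
      exists p, (lo <= p <= hi)%Z /\ W (posr r p) j) ->
  (forall x y : 'I_r, exists Y, y = posr r Y :> nat /\
     ((if (c <=? Z.abs (Y - Z.of_nat x))%Z then Z.abs (Y - Z.of_nat x)
       else 2 * c - Z.abs (Y - Z.of_nat x)) <= Z.of_nat M)%Z) ->
  forall u v, dist (Gadj n r W) u v <= n + M.
Proof.
move=> r0 c0 Hcov Hpl [a x] [b y].
have [Y [hy hY]] := Hpl x y.
have [P [hP1 hP2]] := plan (Z.of_nat x) Y c0.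
have hx : x = posr r (Z.of_nat x) :> nat.
  symmetry; apply: (@posr_unique _ _ _ 0%Z) => //; lia.
have [L [HL HW]] := @ubG n r W a b (Z.of_nat x) P Y x y r0 hx hy
  (Hcov _ _ hP1).
apply: leq_trans (dist_le HW) _.
apply: leq_trans HL _.
move: hP2 hY; case: (c <=? Z.abs (Y - Z.of_nat x))%Z => h1 h2; lia.
Qed.

Definition vone n : bvec n := [ffun _ => true].

Lemma lb_dist n r (W : nat -> nat -> bool) (x y : 'I_r) (D : nat) : 0 < r ->
  D <= #|{: bvec n * 'I_r}| ->
  (forall lo hi Y, (lo <= Z.of_nat x <= hi)%Z -> (lo <= Y <= hi)%Z -> y = posr r Y :> nat ->
     (forall j : 'I_n, exists p, (lo <= p <= hi)%Z /\ W (posr r p) j) ->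
     (Z.of_nat D <= Z.of_nat n + 2 * (hi - lo) - Z.abs (Z.of_nat x - Y))%Z) ->
  D <= dist (Gadj n r W) (vzero n, x) (vone n, y).
Proof.
move=> r0 HD H; apply: dist_ge => // k kD; apply/negP => Wk.
have hx : x = posr r (Z.of_nat x) :> nat.
  symmetry; apply: (@posr_unique _ _ _ 0%Z) => //; lia.
have [lo [hi [Y [h1 [h2 [h3 [h4 h5]]]]]]] := lbG r0 hx Wk.
have := H lo hi Y h1 h2 h3 (fun j => h4 j ltac:(by rewrite !ffunE)).
move: h5.
have -> : Dset (vzero n) (vone n) = setT by apply/setP => j; rewrite !inE !ffunE.
rewrite cardsT card_ord; lia.
Qed.

Lemma card_state n r : #|{: bvec n * 'I_r}| = expn 2 n * r.
Proof. by rewrite card_prod card_ffun card_bool !card_ord. Qed.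

Lemma half_facts n : exists h, n./2 = h /\ (2 * h <= n <= 2 * h + 1).
Proof.
exists n./2; split; first by [].
have e := odd_double_half n; rewrite -muln2 in e.
move: e; case: (odd n) => /= e; lia.
Qed.

Lemma partA n d : 2 <= d -> d <= n -> 3 <= n ->
  diam (Qadj n d n) = n + maxn n./2 (2 * ((n + d.-1) %/ d) - 2).
Proof.
move=> d2 dn n3.
have n0 : 0 < n by lia.
have d0 : 0 < d by lia.
rewrite (@diam_iso _ _ (Gadj n n (WQ n d)) id) //; last exact: Qadj_G.
have hq := divn_eq (n + d.-1) d.
have hrem := ltn_pmod (n + d.-1) d0.
set q := (n + d.-1) %/ d in hq *.
set rm := (n + d.-1) %% d in hq hrem.
have q1 : 1 <= q by nia.
have [h [eh hh]] := half_facts n; rewrite eh.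
have qn : 2 * q - 2 <= n by nia.
apply/eqP; rewrite eqn_leq; apply/andP; split.
  apply: diam_le => u v.
  apply: (@ub_dist n n (WQ n d) (Z.of_nat (q - 1))) => //; first lia.
    move=> lo hi Hlh; apply: covQ_up => //; nia.
  move=> x y.
  have hx := ltn_ord x; have hy := ltn_ord y.
  have ht := divn_eq (y + n - x) n.
  have htl := ltn_pmod (y + n - x) n0.
  set t := (y + n - x) %% n in ht htl; set w := (y + n - x) %/ n in ht.
  case: (leqP t (n - t)) => tn.
    exists (Z.of_nat x + Z.of_nat t)%Z; split.
      symmetry; apply: (@posr_unique _ _ _ (1 - Z.of_nat w)%Z) => //; nia.
    case: (Z.leb_spec (Z.of_nat (q - 1)) _) => hc; lia.
  exists (Z.of_nat x + Z.of_nat t - Z.of_nat n)%Z; split.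
    symmetry; apply: (@posr_unique _ _ _ (- Z.of_nat w)%Z) => //; nia.
  case: (Z.leb_spec (Z.of_nat (q - 1)) _) => hc; lia.
have HT : n + maxn h (2 * q - 2) <= #|{: bvec n * 'I_n}|.
  rewrite card_state.
  have : 2 <= expn 2 n by rewrite -{1}(expn1 2) leq_exp2l; lia.
  move=> h2; apply: leq_trans (leq_mul h2 (leqnn n)); rewrite mul2n -addnn leq_add2l.
  by rewrite geq_max; apply/andP; split; lia.
rewrite addn_maxr geq_max; apply/andP; split.
  set o : 'I_n := Ordinal n0.
  have hn : h < n by lia.
  set oh : 'I_n := Ordinal hn.
  apply: leq_trans (diam_ge _ (vzero n, o) (vone n, oh)).
  apply: (lb_dist n0 (leq_trans _ HT)); first by rewrite leq_add2l leq_maxl.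
  move=> lo hi Y h1 h2 h3 _.
  have [t Ht] := posr_spec Y n0; rewrite -h3 /= in Ht.
  have o0 : Z.of_nat o = 0%Z by [].
  case: (Z.le_gt_cases 0 t) => ht; nia.
set o : 'I_n := Ordinal n0.
apply: leq_trans (diam_ge _ (vzero n, o) (vone n, o)).
apply: (lb_dist n0 (leq_trans _ HT)); first by rewrite leq_add2l leq_maxr.
move=> lo hi Y h1 h2 h3 Hc.
have Hl : (Z.of_nat n <= (hi - lo + 1) * Z.of_nat d)%Z.
  case: (Z.le_gt_cases (Z.of_nat n) ((hi - lo + 1) * Z.of_nat d)) => // H.
  have [j Hj] := covQ_low d0 n0 H.
  have [p [hp Wp]] := Hc j; by move: (Hj p hp); rewrite Wp.
have [t Ht] := posr_spec Y n0; rewrite -h3 /= in Ht.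
have hq2 : (Z.of_nat q <= hi - lo + 1)%Z by nia.
have o0 : Z.of_nat o = 0%Z by [].
case: (Z.le_gt_cases t 0) => ht.
  case: (Z.le_gt_cases 0 t) => ht'.
    have t0 : t = 0%Z by lia.
    rewrite t0 in Ht; lia.
  have : (t * Z.of_nat n <= - Z.of_nat n)%Z by nia.
  lia.
have : (Z.of_nat n <= t * Z.of_nat n)%Z by nia.
lia.
Qed.


Lemma modn_eqZ (k1 k2 m : nat) : 0 < m ->
  (k1 %% m = k2 %% m) <-> exists s, Z.of_nat k1 = (Z.of_nat k2 + s * Z.of_nat m)%Z.
Proof.
move=> m0; split.
  move=> e; exists (Z.of_nat (k1 %/ m) - Z.of_nat (k2 %/ m))%Z.
  have h1 := divn_eq k1 m; have h2 := divn_eq k2 m; rewrite e in h1; lia.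
case=> s hs; rewrite !modn_posr // hs.
have [t Ht] := posr_spec (Z.of_nat k2) m0.
apply: (@posr_unique _ _ _ (t + s)%Z); first exact: posr_lt. lia.
Qed.

Lemma vatE m (b : bvec m) k (m0 : 0 < m) : vat b k = b (Ordinal (ltn_pmod k m0)).
Proof.
apply/existsP/idP => [[i /andP[/eqP e bi]]|bk].
  by have -> : Ordinal (ltn_pmod k m0) = i by apply: ord_inj; rewrite /= e.
by exists (Ordinal (ltn_pmod k m0)); rewrite eqxx.
Qed.

Lemma vat_cong m (b : bvec m) k1 k2 : k1 %% m = k2 %% m -> vat b k1 = vat b k2.
Proof. by rewrite /vat => ->. Qed.

Lemma sigma_cong m j j' (b : bvec m) : j %% m = j' %% m -> sigma j b = sigma j' b.
Proof. by rewrite /sigma => ->. Qed.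

Lemma sigma0 m (b : bvec m) : sigma 0 b = b.
Proof.
apply/ffunP => i; rewrite ffunE.
have m0 : 0 < m by apply: leq_ltn_trans (ltn_ord i).
rewrite vatE; congr (b _); apply: ord_inj => /=.
by rewrite mod0n subn0 modnDr modn_small.
Qed.

Lemma sigma_vadd m j (a c : bvec m) : sigma j (vadd a c) = vadd (sigma j a) (sigma j c).
Proof.
apply/ffunP => i; rewrite !ffunE.
have m0 : 0 < m by apply: leq_ltn_trans (ltn_ord i).
by rewrite !vatE ffunE.
Qed.

Lemma sigma_evec m j k : sigma j (evec m k) = evec m (k + j).
Proof.
apply/ffunP => i; rewrite !ffunE.
have m0 : 0 < m by apply: leq_ltn_trans (ltn_ord i).
rewrite vatE ffunE /=.
have hJ := divn_eq j m; have hJl := ltn_pmod j m0.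
set J := j %% m in hJ hJl *; set qj := j %/ m in hJ.
have hi := ltn_ord i.
apply/eqP/eqP.
  move/(modn_eqZ _ _ m0) => [s hs].
  rewrite -(modn_small hi); apply/(modn_eqZ _ _ m0).
  exists (s - 1 - Z.of_nat qj)%Z; lia.
move=> e; apply/(modn_eqZ _ _ m0).
have : i %% m = (k + j) %% m by rewrite e modn_mod.
move/(modn_eqZ _ _ m0) => [s hs].
exists (s + 1 + Z.of_nat qj)%Z; lia.
Qed.

Lemma sigma_comp m i j (b : bvec m) : sigma i (sigma j b) = sigma (i + j) b.
Proof.
apply/ffunP => t; rewrite !ffunE.
have m0 : 0 < m by apply: leq_ltn_trans (ltn_ord t).
rewrite vatE ffunE /=; apply: vat_cong; apply/(modn_eqZ _ _ m0).
have h1 := divn_eq i m; have h1l := ltn_pmod i m0.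
have h2 := divn_eq j m; have h2l := ltn_pmod j m0.
have h3 := divn_eq (i + j) m; have h3l := ltn_pmod (i + j) m0.
have h4 := divn_eq (t + m - i %% m) m; have h4l := ltn_pmod (t + m - i %% m) m0.
have ht := ltn_ord t.
move: h1 h1l h2 h2l h3 h3l h4 h4l.
set I := i %% m; set J := j %% m; set IJ := (i + j) %% m; set A := (t + m - I) %% m.
set qi := i %/ m; set qj := j %/ m; set qij := (i + j) %/ m; set qa := (t + m - I) %/ m.
move=> h1 h1l h2 h2l h3 h3l h4 h4l.
exists (1 + Z.of_nat qi + Z.of_nat qj - Z.of_nat qij - Z.of_nat qa)%Z; lia.
Qed.

Lemma sigma_inj m j (a b : bvec m) : 0 < m -> sigma j a = sigma j b -> a = b.
Proof.
move=> m0 e.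
have : sigma (m - j %% m) (sigma j a) = sigma (m - j %% m) (sigma j b) by rewrite e.
rewrite !sigma_comp.
have H : (m - j %% m + j) %% m = 0 %% m.
  apply/(modn_eqZ _ _ m0).
  have h := divn_eq j m; have hl := ltn_pmod j m0.
  exists (1 + Z.of_nat (j %/ m))%Z; lia.
by rewrite !(sigma_cong _ H) !sigma0.
Qed.

Definition WC (d : nat) (x j : nat) : bool := j %/ d == x.

Lemma P1r r x x' : x < r -> x' < r -> (r - x) %% r = (r - x') %% r -> x = x'.
Proof.
move=> hx hx' e.
have r0 : 0 < r by lia.
move/(modn_eqZ _ _ r0): e => [s hs].
case: (Z.le_gt_cases s 0) => h1; [case: (Z.le_gt_cases 0 s) => h2|]; nia.
Qed.

Lemma P2r r x : x < r ->
  (r - (x + 1) %% r) %% r = ((r - x) %% r + (r - 1)) %% r.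
Proof.
move=> hx; have r0 : 0 < r by lia.
apply/(modn_eqZ _ _ r0).
have h1 := divn_eq (x + 1) r; have h1l := ltn_pmod (x + 1) r0.
have h2 := divn_eq (r - x) r; have h2l := ltn_pmod (r - x) r0.
move: h1 h1l h2 h2l.
set a1 := (x + 1) %% r; set a2 := (r - x) %% r; set q1 := (x + 1) %/ r; set q2 := (r - x) %/ r.
move=> h1 h1l h2 h2l.
exists (Z.of_nat q1 + Z.of_nat q2 - 1)%Z; lia.
Qed.

Lemma P3r r x : x < r ->
  (r - (x + (r - 1)) %% r) %% r = ((r - x) %% r + 1) %% r.
Proof.
move=> hx; have r0 : 0 < r by lia.
apply/(modn_eqZ _ _ r0).
have h1 := divn_eq (x + (r - 1)) r; have h1l := ltn_pmod (x + (r - 1)) r0.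
have h2 := divn_eq (r - x) r; have h2l := ltn_pmod (r - x) r0.
move: h1 h1l h2 h2l.
set a1 := (x + (r - 1)) %% r; set a2 := (r - x) %% r; set q1 := (x + (r - 1)) %/ r; set q2 := (r - x) %/ r.
move=> h1 h1l h2 h2l.
exists (Z.of_nat q1 + Z.of_nat q2 - 1)%Z; lia.
Qed.

Lemma shiftF d r x (a : bvec (d * r)) : 0 < d -> x < r ->
  sigma (d * (r - (x + 1) %% r)) (sigma (d * 1) a) = sigma (d * (r - x)) a.
Proof.
move=> d0 hx; have r0 : 0 < r by lia.
have m0 : 0 < d * r by rewrite muln_gt0 d0.
rewrite sigma_comp; apply: sigma_cong; apply/(modn_eqZ _ _ m0).
have h1 := divn_eq (x + 1) r; have h1l := ltn_pmod (x + 1) r0.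
move: h1 h1l; set a1 := (x + 1) %% r; set q1 := (x + 1) %/ r => h1 h1l.
exists (Z.of_nat q1)%Z.
have e : (d * (r - a1) + d * 1 = d * (r - x) + q1 * (d * r)).
  rewrite -!mulnDr mulnCA -mulnDr; congr (d * _); lia.
rewrite e; lia.
Qed.

Lemma shiftB d r x (a : bvec (d * r)) : 0 < d -> x < r ->
  sigma (d * (r - (x + (r - 1)) %% r)) (sigma (d * (r - 1)) a) = sigma (d * (r - x)) a.
Proof.
move=> d0 hx; have r0 : 0 < r by lia.
have m0 : 0 < d * r by rewrite muln_gt0 d0.
rewrite sigma_comp; apply: sigma_cong; apply/(modn_eqZ _ _ m0).
have h1 := divn_eq (x + (r - 1)) r; have h1l := ltn_pmod (x + (r - 1)) r0.
move: h1 h1l; set a1 := (x + (r - 1)) %% r; set q1 := (x + (r - 1)) %/ r => h1 h1l.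
exists (Z.of_nat q1)%Z.
have e : (d * (r - a1) + d * (r - 1) = d * (r - x) + q1 * (d * r)).
  rewrite -!mulnDr mulnCA -mulnDr; congr (d * _); lia.
rewrite e; lia.
Qed.

Definition psi d r (r0 : 0 < r) (u : bvec (d * r) * 'I_r) : bvec (d * r) * 'I_r :=
  (sigma (d * (r - u.2)) u.1, Ordinal (ltn_pmod (r - u.2) r0)).

Lemma vadd0 m (b : bvec m) : vadd b (vzero m) = b.
Proof. apply/ffunP => i; by rewrite !ffunE addbF. Qed.

Lemma psi_inj d r (r0 : 0 < r) : 0 < d -> injective (@psi d r r0).
Proof.
move=> d0 [a x] [b y] [e1 e2].
have xy : x = y by apply: ord_inj; apply: P1r => //.
rewrite -xy in e1; have m0 : 0 < d * r by rewrite muln_gt0 d0.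
by rewrite (sigma_inj m0 e1) xy.
Qed.

Lemma evec_shift d r x (k : 'I_d) : 0 < d -> x < r ->
  evec (d * r) (k + d * (r - x)) = evec (d * r) (k + d * ((r - x) %% r)).
Proof.
move=> d0 hx; have r0 : 0 < r by lia.
have m0 : 0 < d * r by rewrite muln_gt0 d0.
apply/ffunP => i; rewrite !ffunE; congr (_ == _).
apply/(modn_eqZ _ _ m0).
have h := divn_eq (r - x) r; have hl := ltn_pmod (r - x) r0.
move: h hl; set a := (r - x) %% r; set q := (r - x) %/ r => h hl.
exists (Z.of_nat q).
have e : k + d * (r - x) = k + d * a + q * (d * r) by rewrite h mulnDr mulnCA; lia.
rewrite e; lia.
Qed.

Lemma jlt d r (k : 'I_d) (z : nat) : z < r -> k + d * z < d * r.
Proof.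
move=> hz; have hk := ltn_ord k.
have : d * z.+1 <= d * r by rewrite leq_mul2l hz orbT.
rewrite mulnS; lia.
Qed.

Lemma COR_iso d r (r0 : 0 < r) : 0 < d -> 3 <= r ->
  forall u v, CORadj d r u v = Gadj (d * r) r (WC d) (psi r0 u) (psi r0 v).
Proof.
move=> d0 r3 [a x] [b y].
have m0 : 0 < d * r by rewrite muln_gt0 d0.
have hx := ltn_ord x; have hy := ltn_ord y.
have hz := ltn_pmod (r - x) r0.
apply/existsP/orP.
  case=> [[s1 s2]] /andP[conn /eqP ev].
  case: ev => eb ey.
  move: conn eb ey; rewrite /CORconn /CORmul /= => conn eb ey.
  case/orP: conn.
    case/andP => /eqP s10 /orP[/eqP s21|/eqP s2r].
      right; rewrite /= eb s10 vadd0.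
      have ey' : (y : nat) = (x + 1) %% r by rewrite ey /= s21.
      rewrite ey' s21 shiftF // eqxx /=.
      by rewrite P2r // eqxx orbT.
    right; rewrite /= eb s10 vadd0.
    have ey' : (y : nat) = (x + (r - 1)) %% r by rewrite ey /= s2r.
    rewrite ey' s2r shiftB // eqxx /=.
    by rewrite P3r // eqxx.
  case/andP => /eqP s20 /existsP[k /eqP s1k].
  have xy : x = y by apply: ord_inj; rewrite ey /= s20 addn0 modn_small.
  left; rewrite /= -xy eqxx /=.
  apply/existsP; exists (Ordinal (jlt k hz)).
  apply/andP; split.
    by rewrite /WC /= addnC mulnC divnMDl // divn_small // addn0.
  rewrite eb s20 s1k muln0 sigma0 sigma_vadd sigma_evec evec_shift //.
case.
  case/andP => e2 /existsP[j /andP[Wj /eqP ej]].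
  have xy : x = y by apply: ord_inj; apply: P1r => //; exact: (f_equal val (eqP e2)).
  rewrite -xy /= in ej Wj.
  exists (evec (d * r) (Ordinal (ltn_pmod j d0)), Ordinal r0).
  apply/andP; split.
    apply/orP; right; apply/existsP.
    by exists (Ordinal (ltn_pmod j d0)).
  apply/eqP; rewrite /CORmul /=; congr (_, _).
    apply: (@sigma_inj _ (d * (r - x))) => //.
    rewrite ej sigma_vadd muln0 sigma0 sigma_evec /=.
    have := evec_shift (Ordinal (ltn_pmod j d0)) d0 hx; rewrite /= => ->.
    congr (vadd _ (evec _ _)).
    have := divn_eq j d; rewrite (eqP Wj) /=; lia.
  by apply: ord_inj; rewrite /= -xy addn0 modn_small.
case/andP => /eqP e1 /orP[/eqP e2|/eqP e2];
  have e1' : sigma (d * (r - x)) a = sigma (d * (r - y)) b := e1.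
  have yx : y = (x + (r - 1)) %% r :> nat.
    apply: P1r => //; first exact: ltn_pmod.
    rewrite P3r //; exact: e2.
  have r1 : r - 1 < r by lia.
  exists (vzero (d * r), Ordinal r1).
  apply/andP; split.
    by apply/orP; left; rewrite /= eqxx /= eqxx orbT.
  apply/eqP; rewrite /CORmul /=; congr (_, _).
    rewrite vadd0; apply: (@sigma_inj _ (d * (r - y))) => //.
    by rewrite -e1' yx shiftB.
  by apply: ord_inj; rewrite /= -yx.
have yx : y = (x + 1) %% r :> nat.
  apply: P1r => //; first exact: ltn_pmod.
  rewrite P2r //; exact: e2.
have r1 : 1 < r by lia.
exists (vzero (d * r), Ordinal r1).
apply/andP; split.
  by apply/orP; left; rewrite /= eqxx.
apply/eqP; rewrite /CORmul /=; congr (_, _).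
  rewrite vadd0; apply: (@sigma_inj _ (d * (r - y))) => //.
  by rewrite -e1' yx shiftF.
by apply: ord_inj; rewrite /= -yx.
Qed.

Lemma covC_up d r lo hi : 0 < d -> 0 < r -> (Z.of_nat r - 1 <= hi - lo)%Z ->
  forall j : 'I_(d * r), exists p, (lo <= p <= hi)%Z /\ WC d (posr r p) j.
Proof.
move=> d0 r0 H j.
have hj := ltn_ord j.
have hz : j %/ d < r by rewrite ltn_divLR //; lia.
set z := j %/ d in hz *.
have Hm := Z.mod_pos_bound (Z.of_nat z - lo) (Z.of_nat r) ltac:(lia).
have Hd := Z.div_mod (Z.of_nat z - lo) (Z.of_nat r) ltac:(lia).
exists (lo + (Z.of_nat z - lo) mod Z.of_nat r)%Z; split; first lia.
rewrite /WC; apply/eqP; symmetry.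
apply: (@posr_unique _ _ _ (- ((Z.of_nat z - lo) / Z.of_nat r))%Z) => //.
lia.
Qed.

Lemma covC_low d r lo hi : 0 < d -> 0 < r -> (hi - lo < Z.of_nat r - 1)%Z ->
  exists j : 'I_(d * r), forall p, (lo <= p <= hi)%Z -> ~~ WC d (posr r p) j.
Proof.
move=> d0 r0 H.
have hz := posr_lt (hi + 1)%Z r0.
set z := posr r (hi + 1) in hz.
have hj : d * z < d * r by rewrite ltn_mul2l d0.
exists (Ordinal hj) => p hp; apply/negP; rewrite /WC /= mulKn // => /eqP e.
have [s Hs] := posr_cong r0 e.
first [apply: (@Zmul_small (hi + 1 - p) s (Z.of_nat r)); lia | apply: (@Zmul_small (hi + 1 - p) (- s) (Z.of_nat r)); lia].
Qed.

Lemma if_bound (c D M : Z) : ((c <= D)%Z -> (D <= M)%Z) -> ((D < c)%Z -> (2 * c - D <= M)%Z) ->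
  ((if (c <=? D)%Z then D else 2 * c - D) <= M)%Z.
Proof. case: (Z.leb_spec c D) => h; auto. Qed.

Lemma partB d r : 1 <= d -> 3 <= r ->
  diam (CORadj d r) = (if r == 3 then (d + 1) * r else (d + 1) * r + r./2 - 2).
Proof.
move=> d0 r3.
have r0 : 0 < r by lia.
rewrite (@diam_iso _ _ (Gadj (d * r) r (WC d)) (@psi d r r0)); first last.
- exact: COR_iso.
- exact: psi_inj.
have [h [eh hh]] := half_facts r; rewrite eh.
set M := if r == 3 then 3 else r + h - 2.
have hM : (r == 3) = (r == 3) by [].
have -> : (if r == 3 then (d + 1) * r else (d + 1) * r + h - 2) = d * r + M.
  rewrite /M mulnDl mul1n; case: eqP => [->|_]; lia.
have HM : (r = 3 -> M = 3) /\ (r != 3 -> M = r + h - 2).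
  by rewrite /M; split => [->//|/negPf ->].
case: HM => HM3 HM4.
have HT : d * r + M <= #|{: bvec (d * r) * 'I_r}|.
  rewrite card_state.
  have h1 : d * r < expn 2 (d * r) by apply: ltn_expl.
  have h2 : 2 <= r by lia.
  have h3 : d * r + M <= (d * r).+1 * r.
    case: (eqVneq r 3) => e; [rewrite (HM3 e) | rewrite (HM4 e)]; nia.
  apply: leq_trans h3 _; rewrite leq_mul2r h1 orbT //.
apply/eqP; rewrite eqn_leq; apply/andP; split.
  apply: diam_le => u v.
  apply: (@ub_dist (d * r) r (WC d) (Z.of_nat r - 1)) => //; first lia.
    move=> lo hi Hlh; exact: covC_up.
  move=> x y.
  have hx := ltn_ord x; have hy := ltn_ord y.
  have ht := divn_eq (y + r - x) r.
  have htl := ltn_pmod (y + r - x) r0.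
  set t := (y + r - x) %% r in ht htl; set w := (y + r - x) %/ r in ht.
  case: (posnP t) => t0.
    exists (Z.of_nat x + Z.of_nat r)%Z; split.
      symmetry; apply: (@posr_unique _ _ _ (2 - Z.of_nat w)%Z) => //; nia.
    case: (eqVneq r 3) => e; [rewrite (HM3 e) | rewrite (HM4 e)];
    refine (if_bound _ _) => hc; lia.
  case: (leqP t h) => th.
    exists (Z.of_nat x + Z.of_nat t - Z.of_nat r)%Z; split.
      symmetry; apply: (@posr_unique _ _ _ (- Z.of_nat w)%Z) => //; nia.
    case: (eqVneq r 3) => e; [rewrite (HM3 e) | rewrite (HM4 e)];
    refine (if_bound _ _) => hc; lia.
  exists (Z.of_nat x + Z.of_nat t)%Z; split.
    symmetry; apply: (@posr_unique _ _ _ (1 - Z.of_nat w)%Z) => //; nia.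
  case: (eqVneq r 3) => e; [rewrite (HM3 e) | rewrite (HM4 e)];
  refine (if_bound _ _) => hc; lia.
have hn : h < r by lia.
set o : 'I_r := Ordinal r0.
set y0 : 'I_r := if r == 3 then o else Ordinal hn.
apply: leq_trans (diam_ge _ (vzero (d * r), o) (vone (d * r), y0)).
apply: (lb_dist r0 HT).
move=> lo hi Y h1 h2 h3 Hc.
have Hl : (Z.of_nat r - 1 <= hi - lo)%Z.
  case: (Z.le_gt_cases (Z.of_nat r - 1) (hi - lo)) => // H.
  have [j Hj] := covC_low d0 r0 H.
  have [p [hp Wp]] := Hc j; by move: (Hj p hp); rewrite Wp.
have [t Ht] := posr_spec Y r0; rewrite -h3 in Ht.
have o0 : Z.of_nat o = 0%Z by [].
case: (eqVneq r 3) => e.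
  rewrite (HM3 e).
  have yv : Z.of_nat y0 = 0%Z by rewrite /y0 (introT eqP e).
  case: (Z.le_gt_cases t 0) => ht.
    case: (Z.le_gt_cases 0 t) => ht'.
      have t0 : t = 0%Z by lia.
      rewrite t0 in Ht; lia.
    have : (t * Z.of_nat r <= - Z.of_nat r)%Z by nia.
    lia.
  have : (Z.of_nat r <= t * Z.of_nat r)%Z by nia.
  lia.
rewrite (HM4 e).
have yv : Z.of_nat y0 = Z.of_nat h by rewrite /y0 (negPf e).
case: (Z.le_gt_cases t 0) => ht.
  case: (Z.le_gt_cases 0 t) => ht'.
    have t0 : t = 0%Z by lia.
    rewrite t0 in Ht; lia.
  case: (Z.le_gt_cases t (-1)) => ht''.
    case: (Z.le_gt_cases (-1) t) => ht3.
      have t0 : t = (-1)%Z by lia.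
      rewrite t0 in Ht; lia.
    have : (t * Z.of_nat r <= - 2 * Z.of_nat r)%Z by nia.
    lia.
  lia.
have : (Z.of_nat r <= t * Z.of_nat r)%Z by nia.
lia.
Qed.


Theorem mainTheorem10 :
  (forall n d : nat, 2 <= d -> d <= n -> 3 <= n ->
     diam (Qadj n d n) = n + maxn n./2 (2 * ((n + d.-1) %/ d) - 2)) /\
  (forall d r : nat, 1 <= d -> 3 <= r ->
     diam (CORadj d r) =
       (if r == 3 then (d + 1) * r else (d + 1) * r + r./2 - 2)).
Proof.
split.
  move=> n d h1 h2 h3; exact: partA.
move=> d r h1 h2; exact: partB.
Qed.
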